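(* Let $T \subseteq R$ and let $b = \pi_T x \in \mathbb{Z}/m\mathbb{Z}$ where $\pi_T = \prod_{i \in T} p_i$ and $x$ is an integer with $\gcd(x, m/g_T) = 1$. Let $e$ be an integer with $e \ge \max(e_1,\dots,e_r)$ and $e \ge 1$. Then $$b^e \equiv \sum_{i \in R\setminus T} d_{R\setminus\{i\}}\; b^{\,e \bmod \varphi(p_i^{e_i})} \pmod{m},$$ where $e \bmod \varphi(p_i^{e_i})$ denotes the least nonnegative residue and $b^0$ is interpreted as $1$ (so that $d_{R\setminus\{i\}} b^0 = d_{R\setminus\{i\}}$).
   Context: Let $m = p_1^{e_1}\cdots p_r^{e_r}$ with $r \ge 1$, distinct primes $p_1,\dots,p_r$ and exponents $e_i \ge 1$, and let $R=\{1,\dots,r\}$. For $I \subseteq R$, $g_I = \prod_{i\in I} p_i^{e_i}$ and $d_I$ denotes the idempotent of $\mathbb{Z}/m\mathbb{Z}$ determined by $I$: the unique residue class modulo $m$ with $d_I \equiv 0 \pmod{p_i^{e_i}}$ for all $i \in I$ and $d_I \equiv 1 \pmod{p_i^{e_i}}$ for all $i \in R\setminus I$. $\varphi$ is Euler's totient function. (An empty sum is $0$.) *)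

(* Defs.v *)
From mathcomp Require Import all_boot all_order all_algebra.
Set Implicit Arguments. Unset Strict Implicit. Unset Printing Implicit Defensive.
Import Order.TTheory GRing.Theory Num.Theory.

Definition modulus (r : nat) (p ex : 'I_r -> nat) : nat :=
  \prod_(i < r) p i ^ ex i.

Definition gpart (r : nat) (p ex : 'I_r -> nat) (I : {set 'I_r}) : nat :=
  \prod_(i in I) p i ^ ex i.

Definition radpart (r : nat) (p : 'I_r -> nat) (T : {set 'I_r}) : nat :=
  \prod_(i in T) p i.

(* d is an idempotent of Z/mZ determined by I: an integer representative of
   the residue class d_I (unique modulo m). *)
Definition is_idem_rep (r : nat) (p ex : 'I_r -> nat) (I : {set 'I_r}) (d : int) : Prop :=
  forall i : 'I_r,
    (i \in I -> (d = 0 %[mod (p i ^ ex i)%:Z])%Z) /\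
    (i \notin I -> (d = 1 %[mod (p i ^ ex i)%:Z])%Z).

(* Main.v *)
Require Import Defs.
From mathcomp Require Import all_boot all_order all_algebra all_fingroup all_solvable.
Import Order.TTheory GRing.Theory Num.Theory.
Local Open Scope ring_scope.

Lemma euler_int (b : int) (n : nat) : (0 < n)%N -> coprimez b n ->
  (b ^+ totient n = 1 %[mod n])%Z.
Proof.
move=> n0 cb.
rewrite -modzXm.
have ge0 : 0 <= (b %% n)%Z by apply: modz_ge0; rewrite eqz_nat -lt0n.
rewrite -(gez0_abs ge0).
set a := `|(b %% n)%Z|%N.
have ca : coprime a n.
  have : coprimez (b %% n)%Z n by rewrite /coprimez gcdz_modl.
  by [].
have := Euler_exp_totient ca => /(congr1 Posz).
rewrite -!modz_nat => <-.
rewrite -!natz natrX; done.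
Qed.

Lemma sum_dvdz (I : finType) (P : pred I) (F : I -> int) (q : int) :
  (forall i, P i -> (q %| F i)%Z) -> (q %| \sum_(i | P i) F i)%Z.
Proof. by move=> h; apply: rpred_sum. Qed.

Lemma coprime_pp (r : nat) (p ex : 'I_r -> nat) i j :
  (forall i, prime (p i)) -> injective p -> i != j ->
  coprime (p i ^ ex i) (p j ^ ex j).
Proof.
move=> hp hinj ij.
apply: coprimeXl; apply: coprimeXr.
rewrite prime_coprime // dvdn_prime2 //.
by apply/eqP => /hinj /eqP; apply/negP.
Qed.

Lemma crt_seq (r : nat) (p ex : 'I_r -> nat) (n : nat) (s : seq 'I_r) :
  (forall i, prime (p i)) -> injective p -> uniq s ->
  (forall i, i \in s -> (p i ^ ex i %| n)%N) ->
  (\prod_(i <- s) p i ^ ex i %| n)%N.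
Proof.
move=> hp hinj; elim: s => [|a s IH] /=; first by rewrite big_nil dvd1n.
move=> /andP [nas us] h.
rewrite big_cons Gauss_dvd.
  by rewrite h ?mem_head // IH // => i iin; apply: h; rewrite inE iin orbT.
rewrite big_seq; apply: (big_ind (fun y => coprime (p a ^ ex a) y)).
- exact: coprimen1.
- by move=> y z cy cz; rewrite coprimeMr cy cz.
- move=> j js; apply: coprime_pp => //.
  by apply: contraNneq nas => ->.
Qed.

Lemma PoszX (n k : nat) : (Posz n) ^+ k = Posz (n ^ k).
Proof. by rewrite -!natz natrX. Qed.

Theorem mainTheorem19 (r : nat) (p ex : 'I_r -> nat)
  (hr : (0 < r)%N)
  (hp : forall i, prime (p i))
  (hinj : injective p)
  (hex : forall i, (1 <= ex i)%N)
  (d : {set 'I_r} -> int)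
  (hd : forall I, is_idem_rep p ex I (d I))
  (T : {set 'I_r}) (x : int)
  (hx : coprimez x (modulus p ex %/ gpart p ex T)%:Z)
  (k : nat)
  (hk1 : (1 <= k)%N)
  (hkmax : forall i, (ex i <= k)%N) :
  let b : int := (radpart p T)%:Z * x in
  (b ^+ k = \sum_(i in ~: T) d (setT :\ i) * b ^+ (k %% totient (p i ^ ex i))
     %[mod (modulus p ex)%:Z])%Z.
Proof.
move=> b.
apply/eqP; rewrite eqz_mod_dvd dvdzE.
rewrite [X in (X %| _)%N]/=.
apply: crt_seq => //; first exact: index_enum_uniq.
move=> j _.
set z := (_ - _)%R.
suff H : ((p j ^ ex j)%:Z %| z)%Z by [].
set q := (p j ^ ex j)%N.
have hdq : forall i, i != j -> (q%:Z %| d (setT :\ i))%Z.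
  move=> i ij; have [h _] := hd (setT :\ i) j.
  apply/dvdz_mod0P; rewrite h ?mod0z //.
  by rewrite !inE eq_sym ij.
have q0 : (0 < q)%N by rewrite expn_gt0 prime_gt0.
case: (boolP (j \in T)) => jT.
- rewrite /z; apply: rpredB.
    rewrite /b exprMn; apply: dvdz_mulr; rewrite PoszX dvdzE /=.
    apply: (dvdn_trans (dvdn_exp2l (p j) (hkmax j))).
    apply: dvdn_exp2r; rewrite /radpart (bigD1 j) //=; exact: dvdn_mulr.
  apply: rpred_sum => i; rewrite inE => iT; apply: dvdz_mulr; apply: hdq.
  by apply: contraNneq iT => ->.
- have jC : j \in ~: T by rewrite inE.
  have cb : coprimez b q.
    rewrite /b coprimezMl; apply/andP; split.
      rewrite coprimezE /= /q coprime_pexpr //; rewrite /radpart.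
      apply: (big_ind (fun y => coprime y (p j))); first exact: coprime1n.
        by move=> y w cy cw; rewrite coprimeMl cy cw.
      move=> i iT; rewrite prime_coprime // dvdn_prime2 //.
      by apply/eqP => /hinj E; move: jT; rewrite -E iT.
    apply: (coprimez_dvdr _ hx).
    have Em : modulus p ex = (gpart p ex T * \prod_(i in ~: T) p i ^ ex i)%N.
      rewrite /modulus /gpart (bigID (fun i => i \in T)) /=.
      by congr (_ * _); apply: eq_bigl => i; rewrite inE.
    rewrite Em mulKn; last by rewrite /gpart prodn_gt0 // => i; rewrite expn_gt0 prime_gt0.
    by rewrite (bigD1 j) //= dvdn_mulr.
  rewrite /z (bigD1 j) //= opprD addrA; apply: rpredB; last first.
    apply: rpred_sum => i /andP [_ ij]; apply: dvdz_mulr; exact: hdq.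
  rewrite -eqz_mod_dvd; apply/eqP.
  have [_ hj1] := hd (setT :\ j) j.
  rewrite -modzMml hj1; last by rewrite !inE eqxx.
  rewrite modzMml mul1r.
  have E : ((b ^+ totient q) %% q = 1 %% q)%Z by apply: euler_int.
  rewrite {1}(divn_eq k (totient q)) exprD mulnC exprM.
  by rewrite -modzMml -modzXm E modzXm expr1n modzMml mul1r.
Qed.
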